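(* Let $\mathcal{B}$ be a linear-quadratic algebra over $R$ with intrinsic grading as described below, and let $\mathcal{B}^!$ be its quadratic dual with differential $\mu_1$. Define $\delta:R\to\mathcal{B}\otimes_R(\mathcal{B}^!)^{op}$ by \[ \delta(e)=\sum_{i:\ e_L(b_i)=e}b_i\otimes(b_i^* )^{op} \] for each elementary idempotent $e$. Then $\delta$ satisfies the rank-one Type DD structure relations, i.e., writing $\delta(1)=\sum_s a_s\otimes c_s^{op}$, \[ \sum_s(-1)^{\deg_h c_s}\mu_1(a_s)\otimes c_s^{op}+\sum_s a_s\otimes\mu_1(c_s)^{op}+\sum_{s,t}(-1)^{\deg_h(a_t)\deg_h(c_s)}a_sa_t\otimes c_t^{op}c_s^{op}=0 \] in $\mathcal{B}\otimes_R(\mathcal{B}^!)^{op}$ (where $c_t^{op}c_s^{op}=(c_sc_t)^{op}$ and the products are zero when idempotents do not match).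
   Context: $R=\mathbb{Z}e_1\times\cdots\times\mathbb{Z}e_k$. $\mathcal{B}$ is a unital associative $R$-algebra with a finite set of multiplicative generators $b_1<\dots<b_m$, each with a unique left idempotent $e_L(b_i)$ and right idempotent $e_R(b_i)$ among the $e_j$. Let $V$ be the free abelian group on the $b_i$ (an $R$-bimodule), $T(V)=\bigoplus_{k\ge0}V^{\otimes_Rk}$, $\mathcal{B}=T(V)/J$. $\mathcal{B}$ is linear-quadratic: $J\cap V=0$ and $J=T(V)J_2T(V)$ with $J_2=J\cap(V\oplus V\otimes_RV)$. Let $I\subset V\otimes_RV$ be the projection of $J_2$, and $\varphi:I\to V$ the map with $\varphi(r)\oplus r\in J_2$ (well defined since $J\cap V=0$). $\mathcal{B}$ has an intrinsic grading with generators homogeneous, $I$ generated by homogeneous elements, $\varphi$ degree-preserving; $\mathcal{B}$ sits in homological degree $0$ with zero differential. Quadratic dual: $V^*=\mathrm{Hom}_{\mathbb{Z}}(V,\mathbb{Z})$ with dual basis $b_i^*$ (same idempotents as $b_i$), $I^\perp\subset V^*\otimes_RV^*$ the annihilator of $I$, $\mathcal{B}^!=T(V^* )/(T(V^* )I^\perp T(V^* ))$, with $b_i^*$ in bidegree $(-\deg b_i,1)$. As in the paper, restriction gives an isomorphism of the degree-$2$ part $(V^*\otimes_RV^* )/I^\perp$ with $I^*=\mathrm{Hom}_{\mathbb{Z}}(I,\mathbb{Z})$ (a $\mathbb{Z}$-basis of $I$ extends to one of $V\otimes_RV$); the differential $\mu_1$ on $\mathcal{B}^!$ is $\mu_1(v^*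 )=\varphi^*(v^* )\in I^*$ on generators, extended by $\mu_1(xy)=(-1)^{\deg_h x}\mu_1(x)y+x\mu_1(y)$. The differential on $\mathcal{B}$ is zero; homological degrees: $\deg_h b_i=0$, $\deg_h b_i^*=1$. *)

(* Defs.v *)
(* Concrete combinatorial model of
   B = T(V)/J,  B^! = T(V^* )/(I^perp),  and  B (x)_R (B^!)^op. *)
From mathcomp Require Import all_boot all_order all_algebra.
Set Implicit Arguments. Unset Strict Implicit. Unset Printing Implicit Defensive.
Import Order.TTheory GRing.Theory Num.Theory.
Local Open Scope ring_scope.

Inductive span (T : Type) (G : (T -> int) -> Prop) : (T -> int) -> Prop :=
| span_gen f : G f -> span G f
| span0 : span G (fun _ => 0)
| spanD f g : span G f -> span G g -> span G (fun x => f x + g x)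
| spanN f : span G f -> span G (fun x => - f x)
| span_ext f g : span G f -> (forall x, f x = g x) -> span G g.

Section Model.
Variables (k m : nat) (eL eR : 'I_m -> 'I_k).

(* b_a (x)_R b_b is nonzero iff e_R(b_a) = e_L(b_b) *)
Definition comp (a b : 'I_m) : bool := eR a == eL b.

(* Z-basis of T(V): paths (s, w, t): either w = [::] and s = t (the
   idempotent e_s), or a composable word w = b_{w_1}...b_{w_n} with
   e_L(b_{w_1}) = e_s and e_R(b_{w_n}) = e_t.  The same paths, with b_i
   replaced by b_i^*, form a Z-basis of T(V^* ). *)
Definition pth := ('I_k * seq 'I_m * 'I_k)%type.

Definition valid_pth (p : pth) : bool :=
  let '(s, w, t) := p in
  match w with
  | [::] => s == t
  | i :: w' => [&& s == eL i, path comp i w' & eR (last i w') == t]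
  end.

Definition pend (p : pth) : 'I_k := p.2.

(* elements of T(V) (resp. T(V^* )) are Z-valued coefficient functions on pth *)
Definition bas (p : pth) : pth -> int := fun x => (x == p)%:Z.

Definition pmul (p q : pth) : pth -> int :=
  let '(s, w, t) := p in let '(s', w', t') := q in
  fun x => if t == s' then (x == (s, w ++ w', t'))%:Z else 0.

Definition lmul (p : pth) (f : pth -> int) : pth -> int :=
  let '(sp, wp, tp) := p in
  fun x => let '(s, w, t) := x in
    if (s == sp) && (take (size wp) w == wp)
    then f (tp, drop (size wp) w, t) else 0.

Definition rmul (f : pth -> int) (q : pth) : pth -> int :=
  let '(sq, wq, tq) := q in
  fun x => let '(s, w, t) := x in
    let n := (size w - size wq)%N in
    if (t == tq) && (drop n w == wq) then f (s, take n w, sq) else 0.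

(* V = free abelian group on the b_i : functions 'I_m -> int.
   V (x)_R V : functions on pairs, only composable pairs matter. *)
Definition V2 := ('I_m * 'I_m -> int)%type.

Definition comp_supp (r : V2) : Prop :=
  forall ij : 'I_m * 'I_m, ~~ comp ij.1 ij.2 -> r ij = 0.

Definition emb (v : 'I_m -> int) (r : V2) : pth -> int :=
  fun x => let '(s, w, t) := x in
  match w with
  | [:: i] => if (s == eL i) && (t == eR i) then v i else 0
  | [:: i; j] => if [&& s == eL i, comp i j & t == eR j] then r (i, j) else 0
  | _ => 0
  end.

Definition ideal_gen (S : ('I_m -> int) -> V2 -> Prop) : (pth -> int) -> Prop :=
  span (fun f => exists p q v r, [/\ valid_pth p, valid_pth q, S v r &
          forall x, f x = lmul p (rmul (emb v r) q) x]).

Definition pairV2 (l r : V2) : int :=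
  \sum_(ij : 'I_m * 'I_m | comp ij.1 ij.2) l ij * r ij.

Definition addV2 (r s : V2) : V2 := fun ij => r ij + s ij.

Variable S : ('I_m -> int) -> V2 -> Prop.

(* J := T(V) J_2 T(V), J_2 = J cap (V (+) V(x)V) *)
Definition Jideal := ideal_gen S.

Definition Iset (r : V2) : Prop := comp_supp r /\ exists v, Jideal (emb v r).

Definition Iperp (l : V2) : Prop := forall r, Iset r -> pairV2 l r = 0.

Definition Kideal := ideal_gen (fun v l => (forall i, v i = 0) /\ Iperp l).

(* T(V) (x)_R T(V^* )^op: coefficient functions on pairs (p, q) of paths
   with pend p = pend q  (b e (x) c^op = b (x) (c e)^op). *)
Definition tens (f g : pth -> int) : pth * pth -> int :=
  fun x => if pend x.1 == pend x.2 then f x.1 * g x.2 else 0.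

(* B (x)_R (B^!)^op = T(V)(x)_R T(V^* )^op / (J (x) T + T (x) K);
   Nsub is this subgroup. *)
Definition Nsub : (pth * pth -> int) -> Prop :=
  span (fun h =>
    (exists f q, [/\ Jideal f, valid_pth q & forall x, h x = tens f (bas q) x]) \/
    (exists p g, [/\ valid_pth p, Kideal g & forall x, h x = tens (bas p) g x])).

Definition zero_in_tensor (h : pth * pth -> int) : Prop := Nsub h.

Definition gen (i : 'I_m) : pth := (eL i, [:: i], eR i).

Definition J_cap_V_zero : Prop :=
  forall x : pth -> int, Jideal x ->
    (forall p : pth, x p != 0 -> size p.1.2 = 1%N) -> forall p, x p = 0.

(* restriction (V^* (x)_R V^* )/I^perp -> I^* is an isomorphism, i.e. every
   Z-linear functional on I extends to V^* (x)_R V^* (equivalently a Z-basis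
   of I extends to a Z-basis of V (x)_R V). *)
Definition restriction_surjective : Prop :=
  forall f : V2 -> int,
    (forall r s, Iset r -> Iset s -> f (addV2 r s) = f r + f s) ->
    exists l : V2, forall r, Iset r -> pairV2 l r = f r.

(* L i in V^* (x)_R V^* represents mu_1(b_i^* ) = phi^*(b_i^* ) in I^*
   ~ (V^* (x)_R V^* )/I^perp = degree-2 part of B^!:  for (v, r) in J_2
   (so phi(r) = v), <L i, r> = b_i^*(phi r) = v i. *)
Definition mu1_lift (L : 'I_m -> V2) : Prop :=
  forall (i : 'I_m) (v : 'I_m -> int) (r : V2),
    comp_supp r -> Jideal (emb v r) -> pairV2 (L i) r = v i.

Definition homog_of {G : Type} (gmul : G -> G -> G) (deg : 'I_m -> G)
   (r : V2) (g : G) : Prop :=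
  forall ij : 'I_m * 'I_m, r ij != 0 -> gmul (deg ij.1) (deg ij.2) = g.

Definition graded_hyp {G : Type} (gmul : G -> G -> G) (deg : 'I_m -> G) : Prop :=
  (forall r, Iset r -> span (fun h => Iset h /\ exists g, homog_of gmul deg h g) r) /\
  (* phi is degree preserving *)
  (forall (v : 'I_m -> int) (r : V2) (g : G), comp_supp r -> Jideal (emb v r) ->
     homog_of gmul deg r g -> forall i, v i != 0 -> deg i = g).

(* mu_1 on B is zero (B has zero differential) *)
Definition muB (f : pth -> int) : pth -> int := fun _ => 0.

(* the left-hand side of the rank-one type DD relation for
   delta(1) = sum_i b_i (x) (b_i^* )^op, i.e. a_s = b_i, c_s = b_i^*,
   deg_h a_s = 0, deg_h c_s = 1, mu_1(c_s) represented by L s: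
     sum_s (-1)^1 mu_1(a_s) (x) c_s^op + sum_s a_s (x) mu_1(c_s)^op
     + sum_{s,t} (-1)^(0*1) a_s a_t (x) (c_s c_t)^op                 *)
Definition DD_lhs (L : 'I_m -> V2) : pth * pth -> int :=
  fun x =>
    \sum_(s < m) (-1) ^+ 1 * tens (muB (bas (gen s))) (bas (gen s)) x
  + \sum_(s < m) tens (bas (gen s)) (emb (fun _ => 0) (L s)) x
  + \sum_(s < m) \sum_(t < m)
       (-1) ^+ (0 * 1) * tens (pmul (gen s) (gen t)) (pmul (gen s) (gen t)) x.

End Model.

(* Main.v *)
Require Import Defs.
From mathcomp Require Import all_boot all_order all_algebra.
From Stdlib Require Import FunctionalExtensionality Classical.
From mathcomp Require Import ring lra.
Set Implicit Arguments. Unset Strict Implicit. Unset Printing Implicit Defensive.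
Import Order.TTheory GRing.Theory Num.Theory.
Local Open Scope ring_scope.

Lemma min_nat (P : nat -> Prop) : forall n, P n -> exists m, P m /\ forall k, P k -> (m <= k)%N.
Proof.
elim/ltn_ind => n IH Pn.
have [[k [kn Pk]]|H] := classic (exists k, (k < n)%N /\ P k).
  exact: IH Pk.
exists n; split => // k Pk; rewrite leqNgt; apply/negP => kn; apply: H; by exists k; split.
Qed.

Section Core.
Variable T : finType.
Definition pr (l w : T -> int) : int := \sum_(x : T) l x * w x.

Definition subgrp (I : (T -> int) -> Prop) :=
  [/\ I (fun _ => 0), (forall f g, I f -> I g -> I (fun x => f x + g x))
    & (forall f, I f -> I (fun x => - f x))].

Definition extp (I : (T -> int) -> Prop) :=
  forall f : (T -> int) -> int,
  (forall r s, I r -> I s -> f (fun x => r x + s x) = f r + f s) ->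
  exists l, forall r, I r -> pr l r = f r.

Lemma subgrp_scale I : subgrp I -> forall q g, I g -> I (fun x => q * g x).
Proof.
case=> I0 ID IN q g Ig.
have Hn : forall n : nat, I (fun x => n%:Z * g x).
  elim=> [|n IH].
  - have -> : (fun x => 0%:Z * g x) = (fun _ => 0).
      by apply: functional_extensionality=> x; rewrite mul0r.
    done.
  - have -> : (fun x => n.+1%:Z * g x) = (fun x => n%:Z * g x + g x).
      by apply: functional_extensionality=> x; rewrite intS mulrDl mul1r addrC.
    by apply: ID.
case: q => n; first exact: Hn.
have -> : (fun x => Negz n * g x) = (fun x => - (n.+1%:Z * g x)).
  by apply: functional_extensionality=> x; rewrite NegzE mulNr.
by apply: IN.
Qed.

Lemma pr_subl l m c w : pr (fun y => l y - c * m y) w = pr l w - c * pr m w.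
Proof. by rewrite /pr mulr_sumr -sumrB; apply: eq_bigr => y _; ring. Qed.

Lemma pr_subr l w c g : pr l (fun y => w y - c * g y) = pr l w - c * pr l g.
Proof. by rewrite /pr mulr_sumr -sumrB; apply: eq_bigr => y _; ring. Qed.

Lemma core_gen (cs : seq T) : forall I, subgrp I -> extp I ->
  (forall w, I w -> forall x, x \notin cs -> w x = 0) ->
  exists s : seq ((T -> int) * (T -> int)),
    (forall a, List.In a s -> I a.1) /\
    forall w, I w -> forall x, w x = \sum_(a <- s) pr a.2 w * a.1 x.
Proof.
elim: cs => [|c cs IH] I HI He Hs.
  by exists [::]; split=> // w Iw x; rewrite big_nil; exact: Hs.
have [Hz|Hnz] := classic (forall w, I w -> w c = 0).
  apply: IH => // w Iw x xn.
  case: (eqVneq x c) => [->|xc]; first exact: Hz.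
  by apply: Hs => //; rewrite in_cons negb_or xc xn.
have HI' := HI; case: HI' => I0 ID IN.
have [w1 [Iw1 w1c]] : exists w1, I w1 /\ 0 < w1 c.
  apply: NNPP => H; apply: Hnz => w Iw; apply/eqP; apply: NNPP => H'.
  have : w c != 0 by apply/negP.
  rewrite neq_lt => /orP [wn|wp].
  - apply: H; exists (fun x => - w x); split; [exact: IN| by rewrite oppr_gt0].
  - by apply: H; exists w.
pose P n := exists w, I w /\ w c = (n.+1)%:Z.
have [n1 Pn1] : exists n, P n.
  move: w1c; case Ew: (w1 c) => [j|j] // jp.
  exists j.-1, w1; split => //; rewrite Ew prednK //.
have [n0 [[g [Ig gc]] Hmin]] := min_nat Pn1.
pose d : int := (n0.+1)%:Z.
have dpos : 0 < d by [].
have dn0 : d != 0 by [].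
have Hmod : forall w, I w -> (w c %% d)%Z = 0.
  move=> w Iw; apply: NNPP => Hr.
  pose q := (w c %/ d)%Z.
  have Iw' : I (fun x => w x + - (q * g x)) by apply: ID => //; apply: IN; apply: subgrp_scale.
  have e : w c + - (q * g c) = (w c %% d)%Z.
    by rewrite gc -/d {1}(divz_eq (w c) d) -/q; ring.
  have rge : 0 <= (w c %% d)%Z by apply: modz_ge0.
  have rlt : (w c %% d)%Z < d by apply: ltz_pmod.
  move: e rge rlt Hr; case: (w c %% d)%Z => [r|r] // e _ rlt Hr.
  have r0 : (0 < r)%N by rewrite lt0n; apply/eqP => r0; apply: Hr; rewrite r0.
  have : P r.-1 by exists (fun x => w x + - (q * g x)); split => //; rewrite e prednK.
  move/Hmin => h; move: rlt; rewrite /d ltz_nat; move: h r0; case: r {e Hr} => //= r h _.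
  by rewrite ltnS leqNgt ltnS h.
pose cf w := (w c %/ d)%Z.
have Hcf : forall w, I w -> w c = cf w * d.
  by move=> w Iw; rewrite {1}(divz_eq (w c) d) Hmod // addr0.
have cfadd : forall r s, I r -> I s -> cf (fun x => r x + s x) = cf r + cf s.
  move=> r s Ir Is; rewrite /cf /= (Hcf r Ir) (Hcf s Is) -mulrDl !mulzK //.
have [lam Hlam] := He cf cfadd.
pose I' w := I w /\ w c = 0.
pose proj w := fun x => w x - cf w * g x.
have projI : forall w, I w -> I' (proj w).
  move=> w Iw; split.
    by apply: ID => //; apply: IN; apply: subgrp_scale.
  by rewrite /proj gc -/d -Hcf // subrr.
have cf0 : forall w, I' w -> cf w = 0.
  by move=> w [Iw wc]; rewrite /cf wc div0z.
have HI'' : subgrp I'.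
  split.
  - by split.
  - by move=> f h [If fc] [Ih hc]; split; [exact: ID | rewrite /= fc hc addr0].
  - by move=> f [If fc]; split; [exact: IN | rewrite /= fc oppr0].
have He' : extp I'.
  move=> f' f'add.
  pose f w := f' (proj w).
  have fadd : forall r s, I r -> I s -> f (fun x => r x + s x) = f r + f s.
    move=> r s Ir Is; rewrite /f -f'add; try exact: projI.
    congr f'; apply: functional_extensionality => x; rewrite /proj cfadd //; ring.
  have [lam' Hl'] := He f fadd.
  exists lam' => r [Ir rc]; rewrite Hl' // /f.
  congr f'; apply: functional_extensionality => x; rewrite /proj cf0 //; ring.
have Hs' : forall w, I' w -> forall x, x \notin cs -> w x = 0.
  move=> w [Iw wc] x xn; case: (eqVneq x c) => [->//|xc].
  by apply: Hs => //; rewrite in_cons negb_or xc xn.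
have [s' [Hin Hret]] := IH I' HI'' He' Hs'.
exists ((g, lam) :: map (fun a => (a.1, fun x => a.2 x - pr a.2 g * lam x)) s'); split.
  move=> a /= [<-//|]; case/List.in_map_iff => b [<- /Hin [Ib _]] //.
move=> w Iw x; rewrite big_cons big_map /=.
have -> : \sum_(j <- s') pr (fun x0 => j.2 x0 - pr j.2 g * lam x0) w * j.1 x
        = \sum_(j <- s') pr j.2 (proj w) * j.1 x.
  apply: eq_bigr => a _; rewrite pr_subl /proj pr_subr Hlam //; congr (_ * _); ring.
rewrite -Hret; last exact: projI.
by rewrite /proj Hlam //; ring.
Qed.

End Core.

Section Gen.
Variable T : Type.
Variable G : (T -> int) -> Prop.
Lemma span_scale c f : Defs.span G f -> Defs.span G (fun x => c * f x).
Proof.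
move=> Hf.
have Hn : forall n : nat, Defs.span G (fun x => n%:Z * f x).
  elim=> [|n IH].
  - by apply: span_ext (span0 G) _ => x; rewrite mul0r.
  - apply: span_ext (spanD IH Hf) _ => x; by rewrite intS mulrDl mul1r addrC.
case: c => n; first exact: Hn.
by apply: span_ext (spanN (Hn n.+1)) _ => x; rewrite NegzE mulNr.
Qed.

Lemma span_sum (I : Type) (r : seq I) (F : I -> T -> int) :
  (forall i, Defs.span G (F i)) -> Defs.span G (fun x => \sum_(i <- r) F i x).
Proof.
move=> HF; elim: r => [|i r IH].
  by apply: span_ext (span0 G) _ => x; rewrite big_nil.
by apply: span_ext (spanD (HF i) IH) _ => x; rewrite big_cons.
Qed.
Lemma span_sum_in (I : Type) (r : seq I) (F : I -> T -> int) :
  (forall i, List.In i r -> Defs.span G (F i)) -> Defs.span G (fun x => \sum_(i <- r) F i x).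
Proof.
elim: r => [|i r IH] HF.
  by apply: span_ext (span0 G) _ => x; rewrite big_nil.
apply: span_ext (spanD (HF i (or_introl erefl)) (IH (fun j h => HF j (or_intror h)))) _.
by move=> x; rewrite big_cons.
Qed.
End Gen.

Lemma sum_delta (I : finType) (j : I) (F : I -> int) :
  \sum_(i : I) (if j == i then F i else 0) = F j.
Proof.
rewrite (bigD1 j) //= eqxx big1 ?addr0 // => i ne; by rewrite eq_sym (negbTE ne).
Qed.

Lemma nilc (T : eqType) (x : T) s : ([::] == x :: s) = false.
Proof. by []. Qed.
Lemma consn (T : eqType) (x : T) s : (x :: s == [::]) = false.
Proof. by []. Qed.

Section Main.
Variables (k m : nat) (eL eR : 'I_m -> 'I_k).
Local Notation P := (pth k m).
Local Notation TT := ('I_m * 'I_m)%type.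

Definition E1 (i : 'I_m) : P -> int := bas (gen eL eR i).
Definition E2 (q : TT) : P -> int := fun y =>
  if Defs.comp eL eR q.1 q.2 then bas ((eL q.1, [:: q.1; q.2], eR q.2) : P) y else 0.

Lemma eq3 (a a' : 'I_k) (w w' : seq 'I_m) (b b' : 'I_k) :
  (((a, w, b) : P) == (a', w', b')) = [&& a == a', w == w' & b == b'].
Proof. by rewrite !xpair_eqE andbA. Qed.

Lemma E1E i a w b : E1 i ((a, w, b) : P) = [&& a == eL i, w == [:: i] & b == eR i]%:Z.
Proof. by rewrite /E1 /bas /gen eq3. Qed.

Lemma E2E q a w b : E2 q ((a, w, b) : P) =
  (Defs.comp eL eR q.1 q.2 && [&& a == eL q.1, w == [:: q.1; q.2] & b == eR q.2])%:Z.
Proof. by rewrite /E2 /bas eq3; case: ifP. Qed.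

Lemma emb_exp v r (y : P) :
  emb eL eR v r y = \sum_i v i * E1 i y + \sum_q r q * E2 q y.
Proof.
case: y => [[a w] b].
case: w => [|i [|j w]].
- by rewrite /= !big1 ?addr0 // => q _; rewrite ?E1E ?E2E ?nilc ?consn /= ?andbF mulr0.
- rewrite [X in _ = _ + X]big1 ?addr0; last first.
    by move=> q _; rewrite E2E eqseq_cons nilc /= !andbF mulr0.
  rewrite (bigD1 i) //= big1 ?addr0; last first.
    by move=> i' ne; rewrite E1E eqseq_cons (eq_sym i) (negbTE ne) /= !andbF mulr0.
  by rewrite E1E eqxx /=; case: (a == eL i); case: (b == eR i); rewrite /= ?mulr1 ?mulr0.
- case: w => [|z w].
  + rewrite [X in _ = X + _]big1 ?add0r; last first.
      by move=> i' _; rewrite E1E eqseq_cons consn /= !andbF mulr0.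
    rewrite (bigD1 (i, j)) //= big1 ?addr0; last first.
      move=> [i' j'] /= ne; rewrite E2E /= !eqseq_cons /= andbT.
      suff -> : (i == i') && (j == j') = false by rewrite !andbF mulr0.
      apply/negP => /andP [/eqP e1 /eqP e2]; move: ne; by rewrite e1 e2 eqxx.
    rewrite E2E /= !eqxx /=.
    by case: (a == eL i); case: (Defs.comp eL eR i j); case: (b == eR j); rewrite /= ?mulr1 ?mulr0.
  + by rewrite /= !big1 ?addr0 // => q _; rewrite ?E1E ?E2E !eqseq_cons ?nilc ?consn /= ?andbF mulr0.
Qed.


Variable L : 'I_m -> V2 m.

Definition delta (q : TT) : V2 m := fun q' => (q' == q)%:Z.
Definition F (w : V2 m) : P -> int := emb eL eR (fun s => pairV2 eL eR (L s) w) w.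
Definition R (l : V2 m) : P -> int := emb eL eR (fun _ => 0) l.
Definition alpha (q : TT) (y : P) : int :=
  \sum_i (if Defs.comp eL eR q.1 q.2 then L i q else 0) * E1 i y + E2 q y.

Lemma F_lin w y : F w y = \sum_q w q * alpha q y.
Proof.
rewrite /F emb_exp /alpha.
under [RHS]eq_bigr do rewrite mulrDr mulr_sumr.
rewrite big_split /=; congr (_ + _).
rewrite exchange_big /=; apply: eq_bigr => i _.
rewrite /pairV2 big_mkcond mulr_suml /=; apply: eq_bigr => q _.
by case: ifP => _; ring.
Qed.

Lemma R_lin l y : R l y = \sum_q l q * E2 q y.
Proof. by rewrite /R emb_exp big1 ?add0r // => i _; rewrite mul0r. Qed.

Lemma sum_deltaq (G : TT -> int) q : \sum_q' delta q q' * G q' = G q.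
Proof.
rewrite -[RHS](sum_delta q G); apply: eq_bigr => q' _.
by rewrite /delta eq_sym; case: (q == q'); rewrite ?mul1r ?mul0r.
Qed.

Lemma F_delta q y : F (delta q) y = alpha q y.
Proof. by rewrite F_lin sum_deltaq. Qed.

Lemma R_delta q y : R (delta q) y = E2 q y.
Proof. by rewrite R_lin sum_deltaq. Qed.

Lemma tensE (f g : P -> int) x :
  tens f g x = if pend x.1 == pend x.2 then f x.1 * g x.2 else 0.
Proof. by []. Qed.

Lemma DD_eq x : DD_lhs eL eR L x =
  if pend x.1 == pend x.2 then \sum_q alpha q x.1 * E2 q x.2 else 0.
Proof.
rewrite /DD_lhs big1 ?add0r; last first.
  by move=> s _; rewrite tensE /muB; case: ifP; rewrite ?mul0r ?mulr0.
have pm : forall s t y, pmul (gen eL eR s) (gen eL eR t) y = E2 (s, t) y by [].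
set c := pend x.1 == pend x.2.
have H3 : \sum_(s < m) \sum_(t < m) (-1) ^+ (0 * 1) *
     tens (pmul (gen eL eR s) (gen eL eR t)) (pmul (gen eL eR s) (gen eL eR t)) x
   = if c then \sum_q E2 q x.1 * E2 q x.2 else 0.
  rewrite pair_bigA; case: ifP => Hc.
    by apply: eq_bigr => -[s t] _; rewrite expr0 mul1r tensE -/c Hc !pm.
  by rewrite big1 // => -[s t] _; rewrite tensE -/c Hc mulr0.
have H2 : \sum_(s < m) tens (bas (gen eL eR s)) (emb eL eR (fun _ => 0) (L s)) x
   = if c then \sum_s E1 s x.1 * R (L s) x.2 else 0.
  case: ifP => Hc.
    by apply: eq_bigr => s _; rewrite tensE -/c Hc.
  by rewrite big1 // => s _; rewrite tensE -/c Hc.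
rewrite H2 H3; case: ifP => _; last by rewrite addr0.
under [in RHS]eq_bigr do rewrite /alpha mulrDl mulr_suml.
rewrite big_split /=; congr (_ + _).
rewrite exchange_big /=; apply: eq_bigr => i _.
rewrite R_lin mulr_sumr; apply: eq_bigr => q _.
rewrite /E2; case: ifP => _; ring.
Qed.


Variable S : ('I_m -> int) -> V2 m -> Prop.

Lemma valid_gen i : valid_pth eL eR (gen eL eR i).
Proof. by rewrite /= !eqxx. Qed.

Lemma valid_Q i j : Defs.comp eL eR i j -> valid_pth eL eR ((eL i, [:: i; j], eR j) : P).
Proof. by move=> h; rewrite /= h !eqxx. Qed.

Lemma tens_embr f v r x : tens f (emb eL eR v r) x =
  \sum_i v i * tens f (E1 i) x + \sum_q r q * tens f (E2 q) x.
Proof.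
rewrite [LHS]tensE emb_exp; case: ifP => Hc.
  by rewrite mulrDr !mulr_sumr; congr (_ + _); apply: eq_bigr => i _; rewrite tensE Hc; ring.
by rewrite !big1 ?addr0 // => i _; rewrite tensE Hc mulr0.
Qed.

Lemma tens_embl g v r x : tens (emb eL eR v r) g x =
  \sum_i v i * tens (E1 i) g x + \sum_q r q * tens (E2 q) g x.
Proof.
rewrite [LHS]tensE emb_exp; case: ifP => Hc.
  by rewrite mulrDl !mulr_suml; congr (_ + _); apply: eq_bigr => i _; rewrite tensE Hc; ring.
by rewrite !big1 ?addr0 // => i _; rewrite tensE Hc mulr0.
Qed.

Lemma NsubL f v r : Jideal eL eR S f -> Nsub eL eR S (tens f (emb eL eR v r)).
Proof.
move=> Jf.
have H1 : forall i, Nsub eL eR S (fun x => v i * tens f (E1 i) x).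
  move=> i; apply: span_scale; apply: span_gen; left.
  by exists f, (gen eL eR i); split => //; exact: valid_gen.
have H2 : forall q, Nsub eL eR S (fun x => r q * tens f (E2 q) x).
  move=> q; apply: span_scale; case Hc: (Defs.comp eL eR q.1 q.2).
    apply: span_gen; left; exists f, (eL q.1, [:: q.1; q.2], eR q.2); split => //.
      exact: valid_Q.
    by move=> x; rewrite /tens /E2 Hc.
  by apply: span_ext (span0 _) _ => x; rewrite tensE /E2 Hc; case: ifP; rewrite ?mulr0.
apply: span_ext (spanD (span_sum (index_enum _) H1) (span_sum (index_enum _) H2)) _.
by move=> x; rewrite tens_embr.
Qed.

Lemma NsubR g v r : Kideal eL eR S g -> Nsub eL eR S (tens (emb eL eR v r) g).
Proof.
move=> Kg.
have H1 : forall i, Nsub eL eR S (fun x => v i * tens (E1 i) g x).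
  move=> i; apply: span_scale; apply: span_gen; right.
  by exists (gen eL eR i), g; split => //; exact: valid_gen.
have H2 : forall q, Nsub eL eR S (fun x => r q * tens (E2 q) g x).
  move=> q; apply: span_scale; case Hc: (Defs.comp eL eR q.1 q.2).
    apply: span_gen; right; exists (eL q.1, [:: q.1; q.2], eR q.2), g; split => //.
      exact: valid_Q.
    by move=> x; rewrite /tens /E2 Hc.
  by apply: span_ext (span0 _) _ => x; rewrite tensE /E2 Hc; case: ifP; rewrite ?mul0r.
apply: span_ext (spanD (span_sum (index_enum _) H1) (span_sum (index_enum _) H2)) _.
by move=> x; rewrite tens_embl.
Qed.

Lemma lmul_id (s : 'I_k) f a w b :
  lmul ((s, [::], s) : P) f ((a, w, b) : P) = if a == s then f ((a, w, b) : P) else 0.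
Proof. by rewrite /lmul /= take0 drop0 andbT; case: eqP => [->|]. Qed.

Lemma rmul_id (t : 'I_k) f a w b :
  rmul f ((t, [::], t) : P) ((a, w, b) : P) = if b == t then f ((a, w, b) : P) else 0.
Proof. by rewrite /rmul /= subn0 drop_size take_size andbT; case: eqP => [->|]. Qed.

Lemma Kid mu : Iperp eL eR S mu -> Kideal eL eR S (emb eL eR (fun _ => 0) mu).
Proof.
move=> Hmu.
have H : forall s t : 'I_k, Kideal eL eR S
     (lmul ((s, [::], s) : P) (rmul (emb eL eR (fun _ => 0) mu) ((t, [::], t) : P))).
  move=> s t; apply: span_gen.
  exists (s, [::], s), (t, [::], t), (fun _ => 0), mu; split => //=; exact: eqxx.
apply: span_ext (span_sum (index_enum _) (fun s => span_sum (index_enum _) (H s))) _.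
move=> [[a w] b].
under eq_bigr => s _ do under eq_bigr => t _ do rewrite lmul_id rmul_id.
rewrite -[RHS](sum_delta a (fun _ => emb eL eR (fun _ => 0) mu (a, w, b))).
apply: eq_bigr => s _; case: (a == s); last by rewrite big1.
by rewrite -[RHS](sum_delta b (fun _ => emb eL eR (fun _ => 0) mu (a, w, b))).
Qed.

End Main.

Lemma alg (T : finType) (A B : T -> int) (s : seq ((T -> int) * (T -> int))) :
  \sum_q A q * B q = \sum_(a <- s) (\sum_q a.1 q * A q) * (\sum_q a.2 q * B q)
     + \sum_q A q * \sum_q' (((q' == q)%:Z - \sum_(a <- s) a.1 q * a.2 q') * B q').
Proof.
have E : forall q, \sum_q' (((q' == q)%:Z - \sum_(a <- s) a.1 q * a.2 q') * B q')
     = B q - \sum_q' (\sum_(a <- s) a.1 q * a.2 q') * B q'.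
  move=> q; under eq_bigr do rewrite mulrBl; rewrite sumrB; congr (_ - _).
  rewrite -(sum_delta q B); apply: eq_bigr => q' _; rewrite eq_sym.
  by case: (q == q'); rewrite ?mul1r ?mul0r.
under [X in _ = _ + X]eq_bigr do rewrite E mulrBr.
rewrite sumrB.
suff -> : \sum_(a <- s) (\sum_q a.1 q * A q) * (\sum_q a.2 q * B q)
   = \sum_q A q * \sum_q' (\sum_(a <- s) a.1 q * a.2 q') * B q' by ring.
transitivity (\sum_(a <- s) \sum_q \sum_q' (a.1 q * A q) * (a.2 q' * B q')).
  by apply: eq_bigr => a _; rewrite mulr_suml; apply: eq_bigr => q _; rewrite mulr_sumr.
transitivity (\sum_q \sum_q' \sum_(a <- s) (a.1 q * A q) * (a.2 q' * B q')).
  rewrite exchange_big; apply: eq_bigr => q _; exact: exchange_big.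
apply: eq_bigr => q _; rewrite mulr_sumr; apply: eq_bigr => q' _.
rewrite mulr_suml mulr_sumr; apply: eq_bigr => a _; ring.
Qed.


Theorem proposition4p24
  (k m : nat) (eL eR : 'I_m -> 'I_k)
  (S : ('I_m -> int) -> V2 m -> Prop)
  (G : Type) (gmul : G -> G -> G) (deg : 'I_m -> G)
  (hJV : J_cap_V_zero eL eR S)
  (hres : restriction_surjective eL eR S)
  (hgr : graded_hyp eL eR S gmul deg)
  (L : 'I_m -> V2 m) (hL : mu1_lift eL eR S L) :
  zero_in_tensor eL eR S (DD_lhs eL eR L).
Proof.
pose I := Iset eL eR S.
have emb_add : forall v1 v2 r1 r2 y,
    emb eL eR (fun s => v1 s + v2 s) (fun q => r1 q + r2 q) y
    = emb eL eR v1 r1 y + emb eL eR v2 r2 y.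
  move=> v1 v2 r1 r2 y; rewrite !emb_exp.
  have e1 : \sum_i (v1 i + v2 i) * E1 eL eR i y
      = \sum_i v1 i * E1 eL eR i y + \sum_i v2 i * E1 eL eR i y.
    by rewrite -big_split; apply: eq_bigr => i _; rewrite mulrDl.
  have e2 : \sum_q (r1 q + r2 q) * E2 eL eR q y
      = \sum_q r1 q * E2 eL eR q y + \sum_q r2 q * E2 eL eR q y.
    by rewrite -big_split; apply: eq_bigr => i _; rewrite mulrDl.
  rewrite e1 e2; ring.
have emb_opp : forall v r y,
    emb eL eR (fun s => - v s) (fun q => - r q) y = - emb eL eR v r y.
  move=> v r y; rewrite !emb_exp opprD -!sumrN.
  by congr (_ + _); apply: eq_bigr => i _; rewrite mulNr.
have emb_0 : forall y, emb eL eR (fun _ => 0) (fun _ => 0) y = 0.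
  by move=> y; rewrite emb_exp !big1 ?addr0 // => i _; rewrite mul0r.
have HI : subgrp I.
  split.
  - split; first by [].
    by exists (fun _ => 0); apply: span_ext (span0 _) _ => y; rewrite emb_0.
  - move=> f g [cf [v1 J1]] [cg [v2 J2]]; split.
      by move=> ij h; rewrite /= cf // cg // addr0.
    exists (fun s => v1 s + v2 s); apply: span_ext (spanD J1 J2) _ => y.
    by rewrite emb_add.
  - move=> f [cf [v1 J1]]; split.
      by move=> ij h; rewrite /= cf // oppr0.
    exists (fun s => - v1 s); apply: span_ext (spanN J1) _ => y.
    by rewrite emb_opp.
have pr_pair : forall l r, comp_supp eL eR r -> pr l r = pairV2 eL eR l r.
  move=> l r cr; rewrite /pr /pairV2 [RHS]big_mkcond; apply: eq_bigr => ij _.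
  by case: ifP => h //; rewrite (cr ij) ?h // mulr0.
have He : extp I.
  move=> f fadd; have [l Hl] := hres f fadd.
  by exists l => r Ir; rewrite -Hl // pr_pair //; case: Ir.
have Hs : forall w, I w -> forall x, x \notin @index_enum (prod 'I_m 'I_m) -> w x = 0.
  by move=> w _ x; rewrite mem_index_enum.
have [s [Hin Hret]] := core_gen HI He Hs.
have JF : forall r, I r -> Jideal eL eR S (F eL eR L r).
  move=> r [cr [v Jv]]; rewrite /F.
  have -> : (fun s => pairV2 eL eR (L s) r) = v.
    by apply: functional_extensionality => s0; exact: hL s0 v r cr Jv.
  exact: Jv.
pose mu q : V2 m := fun q' => delta q q' - \sum_(a <- s) a.1 q * a.2 q'.
have Hmu : forall q, Iperp eL eR S (mu q).
  move=> q r Ir; rewrite -pr_pair; last by case: Ir.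
  rewrite /pr /mu; under eq_bigr do rewrite mulrBl.
  rewrite sumrB sum_deltaq.
  have -> : \sum_i (\sum_(a <- s) a.1 q * a.2 i) * r i = \sum_(a <- s) pr a.2 r * a.1 q.
    under eq_bigr do rewrite mulr_suml.
    rewrite exchange_big; apply: eq_bigr => a _; rewrite /pr mulr_suml.
    by apply: eq_bigr => i _; ring.
  by rewrite -Hret // subrr.
rewrite /zero_in_tensor.
have N1 : Nsub eL eR S (fun x => \sum_(a <- s) tens (F eL eR L a.1) (R eL eR a.2) x).
  apply: span_sum_in => a Ha; apply: NsubL; exact: JF (Hin a Ha).
have N2 : Nsub eL eR S (fun x => \sum_q tens (F eL eR L (delta q)) (R eL eR (mu q)) x).
  apply: (span_sum (index_enum _)) => q; apply: NsubR; exact: Kid (Hmu q).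
apply: span_ext (spanD N1 N2) _ => x.
rewrite DD_eq.
set c := pend x.1 == pend x.2.
have t1 : forall a : (V2 m * V2 m)%type, tens (F eL eR L a.1) (R eL eR a.2) x =
    if c then (\sum_q a.1 q * alpha eL eR L q x.1) * (\sum_q a.2 q * E2 eL eR q x.2) else 0.
  by move=> a; rewrite tensE F_lin R_lin.
have t2 : forall q, tens (F eL eR L (delta q)) (R eL eR (mu q)) x =
    if c then alpha eL eR L q x.1 *
      \sum_q' (((q' == q)%:Z - \sum_(a <- s) a.1 q * a.2 q') * E2 eL eR q' x.2) else 0.
  by move=> q; rewrite tensE F_delta R_lin.
rewrite (eq_bigr _ (fun a _ => t1 a)) (eq_bigr _ (fun q _ => t2 q)).
case: ifP => _; first (have := (alg (fun q => alpha eL eR L q x.1) (fun q => E2 eL eR q x.2) s); move=> H0; by rewrite [RHS]H0).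
by rewrite !big1 // addr0.
Qed.
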